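(* Let $\mathcal A$ be a linear time-invariant algorithm with $n$ oracles and realization $(A,B,C,D)$, let $\kappa\subseteq[n]$ with $\bar\kappa=[n]\setminus\kappa$ and $D[\kappa]$ invertible. If $\mathcal A$ converges to a fixed point $(y[\kappa]^\star,y[\bar\kappa]^\star,u[\kappa]^\star,u[\bar\kappa]^\star,x^\star)$, then its conjugate $\mathcal B=\mathcal C_\kappa\mathcal A$ converges to the fixed point $(u[\kappa]^\star,y[\bar\kappa]^\star,y[\kappa]^\star,u[\bar\kappa]^\star,x^\star)$.
   Context: $\mathcal A$ generates $x^{k+1}=Ax^k+Bu^k$, $y^k=Cx^k+Du^k$, $u^k=\phi(y^k)$, where the oracles are (sub)gradients $\partial f_i$, $i\in[n]$; $y[\kappa],u[\kappa]$ denote the components of oracle arguments/outputs belonging to oracles in $\kappa$, and $D[\kappa]$ the corresponding diagonal block of $D$. A fixed point is a tuple of oracle arguments, oracle outputs and state satisfying $x^\star=Ax^\star+Bu^\star$, $y^\star=Cx^\star+Du^\star$, $u^\star=\phi(y^\star)$ (listed as arguments, then outputs, then state). The conjugation $\mathcal C_\kappa\mathcal A$ rewrites $\mathcal A$ to call $\partial f_i^\star=(\partial f_i)^{-1}$ instead of $\partial f_i$ for $i\in\kappa$, so that for these oracles the argument and output are swapped (the new oracle argument is the old output and vice versa); its realization is obtained by solving the $\kappa$-rows of $y=Cx+Du$ for $u[\kappa]$. *)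

(* Defs.v *)
From HB Require Import structures.
From mathcomp Require Import all_boot all_order all_algebra.
From mathcomp Require Import all_classical all_reals all_analysis.
Import Order.TTheory GRing.Theory Num.Theory.
Import numFieldNormedType.Exports.
Local Open Scope ring_scope.
Local Open Scope classical_set_scope.

(*  - m : total number of scalar components of the oracle-argument vector y *)
(*        (and of the oracle-output vector u, same size).                   *)
(*  - n : number of oracles; own j : 'I_n says to which oracle the scalar   *)
(*        component j : 'I_m belongs (so oracle i acts on the block of      *)
(*        components [set j | own j == i], of arbitrary dimension).          *)

Section Defs.
Context {R : realType}.

(* selection matrix of the components in S (in increasing order):
   (Sel S)^T *m v = v[S], and Sel S *m w embeds w back into 'cV_m. *)
Definition Sel {m : nat} (S : {set 'I_m}) : 'M[R]_(m, #|S|) :=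
  \matrix_(j < m, k < #|S|) ((j == enum_val k)%:R).

Definition ocomp {m n : nat} (own : 'I_m -> 'I_n) (i : 'I_n) : {set 'I_m} :=
  [set j | own j == i].
Definition compK {m n : nat} (own : 'I_m -> 'I_n) (kappa : {set 'I_n})
  : {set 'I_m} := [set j | own j \in kappa].

Definition blk {m n : nat} (own : 'I_m -> 'I_n) (i : 'I_n) (v : 'cV[R]_m)
  : 'cV[R]_#|ocomp own i| := (Sel (ocomp own i))^T *m v.

Definition subgrad {d : nat} (f : 'cV[R]_d -> \bar R) (y g : 'cV[R]_d) : Prop :=
  f y \is a fin_num /\
  forall z : 'cV[R]_d, (f y + ((g^T *m (z - y)) 0 0)%:E <= f z)%E.

(* Oracle i is \partial f_i if i \notin conj, and
   (\partial f_i)^{-1} = \partial f_i^* if i \in conj, i.e. the output u_i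
   satisfies  y_i \in \partial f_i (u_i). *)
Definition oracle {m n : nat} (own : 'I_m -> 'I_n)
  (f : forall i : 'I_n, 'cV[R]_#|ocomp own i| -> \bar R)
  (conj : {set 'I_n}) (y u : 'cV[R]_m) : Prop :=
  forall i : 'I_n,
    if i \in conj then subgrad (f i) (blk own i u) (blk own i y)
    else subgrad (f i) (blk own i y) (blk own i u).

Definition trajectory {p m n : nat} (own : 'I_m -> 'I_n)
  (f : forall i : 'I_n, 'cV[R]_#|ocomp own i| -> \bar R) (conj : {set 'I_n})
  (A : 'M[R]_p) (B : 'M[R]_(p, m)) (C : 'M[R]_(m, p)) (D : 'M[R]_m)
  (x : nat -> 'cV[R]_p) (y u : nat -> 'cV[R]_m) : Prop :=
  forall k : nat,
    [/\ x k.+1 = A *m x k + B *m u k,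
        y k = C *m x k + D *m u k &
        oracle own f conj (y k) (u k)].

Definition fixed_point {p m n : nat} (own : 'I_m -> 'I_n)
  (f : forall i : 'I_n, 'cV[R]_#|ocomp own i| -> \bar R) (conj : {set 'I_n})
  (A : 'M[R]_p) (B : 'M[R]_(p, m)) (C : 'M[R]_(m, p)) (D : 'M[R]_m)
  (ys us : 'cV[R]_m) (xs : 'cV[R]_p) : Prop :=
  [/\ xs = A *m xs + B *m us, ys = C *m xs + D *m us &
      oracle own f conj ys us].

Definition converges_to {p m n : nat} (own : 'I_m -> 'I_n)
  (f : forall i : 'I_n, 'cV[R]_#|ocomp own i| -> \bar R) (conj : {set 'I_n})
  (A : 'M[R]_p) (B : 'M[R]_(p, m)) (C : 'M[R]_(m, p)) (D : 'M[R]_m)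
  (ys us : 'cV[R]_m) (xs : 'cV[R]_p) : Prop :=
  fixed_point own f conj A B C D ys us xs /\
  forall (x : nat -> 'cV[R]_p) (y u : nat -> 'cV[R]_m),
    trajectory own f conj A B C D x y u ->
    [/\ x @ \oo --> xs, y @ \oo --> ys & u @ \oo --> us].

(* Realization of the conjugate C_kappa A.  With SK := Sel K (K = components *)
(* of the oracles in kappa), SL := Sel (~: K), Di := D[kappa]^{-1}, solving  *)
(* the kappa-rows  y[K] = C[K] x + D[K,K] u[K] + D[K,L] u[L]  gives          *)
(*   u[K] = Di (y[K] - C[K] x - D[K,L] u[L]).                                *)
(* New oracle arguments  y' = SK u[K] + SL y[L],                             *)
(* new oracle outputs    u' = SK y[K] + SL u[L]  (components keep their      *)
(* positions), and                                                          *)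
(*   x+     = A x + B SK u[K] + B SL u[L]                                   *)
(*   y'[K]  = u[K]                                                          *)
(*   y'[L]  = C[L] x + D[L,K] u[K] + D[L,L] u[L].                           *)
Section Conj.
Variables (p m n : nat) (own : 'I_m -> 'I_n) (kappa : {set 'I_n}).
Variables (A : 'M[R]_p) (B : 'M[R]_(p, m)) (C : 'M[R]_(m, p)) (D : 'M[R]_m).

Let K := compK own kappa.
Let SK := Sel K.
Let SL := Sel (~: K).

Definition Dkappa : 'M[R]_#|K| := SK^T *m D *m SK.

Let Di := invmx Dkappa.
(* u[K] = EX x + EY y[K] + EU u[L] *)
Let EX : 'M[R]_(#|K|, p) := - (Di *m SK^T *m C).
Let EY : 'M[R]_#|K| := Di.
Let EU : 'M[R]_(#|K|, #|~: K|) := - (Di *m SK^T *m D *m SL).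

Definition conjA : 'M[R]_p := A + B *m SK *m EX.
Definition conjB : 'M[R]_(p, m) :=
  B *m SK *m EY *m SK^T + (B *m SL + B *m SK *m EU) *m SL^T.
Definition conjC : 'M[R]_(m, p) :=
  SK *m EX + SL *m (SL^T *m C + SL^T *m D *m SK *m EX).
Definition conjD : 'M[R]_m :=
  SK *m (EY *m SK^T + EU *m SL^T)
  + SL *m (SL^T *m D *m SK *m EY *m SK^T
           + (SL^T *m D *m SL + SL^T *m D *m SK *m EU) *m SL^T).

End Conj.

Definition mergeK {m n : nat} (own : 'I_m -> 'I_n) (kappa : {set 'I_n})
  (v w : 'cV[R]_m) : 'cV[R]_m :=
  Sel (compK own kappa) *m ((Sel (compK own kappa))^T *m v)
  + Sel (~: compK own kappa) *m ((Sel (~: compK own kappa))^T *m w).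

End Defs.
Arguments Dkappa {R m n} own kappa D.
Arguments conjA {R p m n} own kappa A B C D.
Arguments conjB {R p m n} own kappa B D.
Arguments conjC {R p m n} own kappa C D.
Arguments conjD {R m n} own kappa D.

(* Main.v *)
Require Import Defs.
From HB Require Import structures.
From mathcomp Require Import all_boot all_order all_algebra.
From mathcomp Require Import all_classical all_reals all_analysis.
Import Order.TTheory GRing.Theory Num.Theory.
Import numFieldNormedType.Exports.
Local Open Scope ring_scope.

Section Sel.
Context {R : realType} {m : nat}.

Lemma SelTS (S : {set 'I_m}) : (Sel S)^T *m Sel S = 1%:M :> 'M[R]_#|S|.
Proof.
apply/matrixP => k k'; rewrite !mxE (bigD1 (enum_val k)) //= big1.
  rewrite !mxE eqxx mul1r addr0 (inj_eq enum_val_inj).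
  by case: (k == k').
move=> j /negbTE; rewrite !mxE => ->; by rewrite mul0r.
Qed.

Lemma Sel_disj (S T : {set 'I_m}) : [disjoint S & T] ->
  (Sel S)^T *m Sel T = 0 :> 'M[R]_(#|S|, #|T|).
Proof.
move=> dST; apply/matrixP => k k'; rewrite !mxE big1 // => j _.
rewrite !mxE; case: eqP => [->|]; last by rewrite mul0r.
case: eqP => [E|]; last by rewrite mulr0.
have := enum_valP k; have := enum_valP k'; rewrite -E => hT hS.
by rewrite (disjointFr dST hS) in hT.
Qed.

Lemma Sel_split (S : {set 'I_m}) :
  Sel S *m (Sel S)^T + Sel (~: S) *m (Sel (~: S))^T = 1%:M :> 'M[R]_m.
Proof.
have H : forall (T : {set 'I_m}) (j j' : 'I_m),
  (Sel T *m (Sel T)^T) j j' = ((j == j') && (j \in T))%:R :> R.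
  move=> T j j'; rewrite !mxE.
  under eq_bigr do rewrite !mxE.
  rewrite -(big_enum_val (fun t => (j == t)%:R * (j' == t)%:R)) /=.
  case jT: (j \in T).
    rewrite (bigD1 j) //= big1 ?eqxx ?mul1r ?addr0 ?andbT 1?eq_sym //.
    by move=> t /andP [_ /negbTE]; rewrite eq_sym => ->; rewrite mul0r.
  rewrite big1 ?andbF // => t tT; have : j != t by apply: contraFN jT => /eqP ->.
  by move/negbTE => ->; rewrite mul0r.
apply/matrixP => j j'; rewrite mxE !H mxE inE.
by case: (j == j'); case: (j \in S); rewrite ?addr0 ?add0r.
Qed.

End Sel.
Section Main.
Variables (R : realType) (p m n : nat) (own : 'I_m -> 'I_n) (kappa : {set 'I_n}).
Variables (A : 'M[R]_p) (B : 'M[R]_(p, m)) (C : 'M[R]_(m, p)) (D : 'M[R]_m).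
Local Notation K := (compK own kappa).
Local Notation SK := (Sel K : 'M[R]_(m, #|K|)).
Local Notation SL := (Sel (~: K) : 'M[R]_(m, #|~: K|)).
Variable Dk : 'M[R]_#|K|.
Hypothesis hDk : Dk = SK^T *m D *m SK.
Local Notation Di := (invmx Dk).
Local Notation EX := (- (Di *m SK^T *m C)).
Local Notation EU := (- (Di *m SK^T *m D *m SL)).
Hypothesis Dku : Dk \in unitmx.

Lemma dKL : [disjoint K & ~: K]. Proof. by rewrite finset.disjoints_subset finset.setCK. Qed.
Lemma dLK : [disjoint ~: K & K]. Proof. by rewrite disjoint_sym dKL. Qed.

Lemma projK k (X : 'M[R]_(#|K|, k)) Y : SK^T *m (SK *m X + SL *m Y) = X.
Proof. by rewrite mulmxDr !mulmxA SelTS (Sel_disj _ _ dKL) mul1mx mul0mx addr0. Qed.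
Lemma projL k (X : 'M[R]_(#|K|, k)) Y : SL^T *m (SK *m X + SL *m Y) = Y.
Proof. by rewrite mulmxDr !mulmxA SelTS (Sel_disj _ _ dLK) mul1mx mul0mx add0r. Qed.

Lemma eq_split k (v w : 'M[R]_(m, k)) :
  SK^T *m v = SK^T *m w -> SL^T *m v = SL^T *m w -> v = w.
Proof.
move=> h1 h2; rewrite -(mul1mx v) -(mul1mx w) -(Sel_split K) !mulmxDl -!mulmxA.
by rewrite h1 h2.
Qed.

Lemma decomp k (v : 'M[R]_(m, k)) : v = SK *m (SK^T *m v) + SL *m (SL^T *m v).
Proof. by rewrite !mulmxA -mulmxDl Sel_split mul1mx. Qed.

Lemma mergeK_K (v w : 'cV[R]_m) : SK^T *m mergeK own kappa v w = SK^T *m v.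
Proof. exact: projK. Qed.
Lemma mergeK_L (v w : 'cV[R]_m) : SL^T *m mergeK own kappa v w = SL^T *m w.
Proof. exact: projL. Qed.

Definition sol (x : 'cV[R]_p) (a : 'cV[R]_#|K|) (b : 'cV[R]_#|~: K|) :=
  EX *m x + Di *m a + EU *m b.

Lemma solE x a b c :
  (a = SK^T *m C *m x + Dk *m c + SK^T *m D *m SL *m b) <-> (c = sol x a b).
Proof.
rewrite /sol; split => ->.
  rewrite !mulmxDr !mulmxA mulVmx // mul1mx ?mulNmx ?mulmxA.
  by rewrite -addrA addrK addKr.
rewrite !mulmxDr !mulNmx !mulmxN ?mulmxA mulmxV // ?mul1mx.
by rewrite addrA addrNK addNKr.
Qed.

Definition cA := A + B *m SK *m EX.
Definition cB := B *m SK *m Di *m SK^T + (B *m SL + B *m SK *m EU) *m SL^T.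
Definition cC := SK *m EX + SL *m (SL^T *m C + SL^T *m D *m SK *m EX).
Definition cD := SK *m (Di *m SK^T + EU *m SL^T) + SL *m (SL^T *m D *m SK *m Di *m SK^T
           + (SL^T *m D *m SL + SL^T *m D *m SK *m EU) *m SL^T).

Lemma stateE x w : cA *m x + cB *m w =
  A *m x + B *m (SK *m sol x (SK^T *m w) (SL^T *m w) + SL *m (SL^T *m w)).
Proof.
rewrite /cA /cB /sol !(mulmxDl, mulmxDr, mulmxN, mulNmx, mulmxA) -!addrA.
by congr (_ + (_ + (_ + _))); rewrite addrC.
Qed.

Lemma outK x w : SK^T *m (cC *m x + cD *m w) = sol x (SK^T *m w) (SL^T *m w).
Proof.
rewrite mulmxDr !mulmxA /cC /cD !projK /sol mulmxDl !mulmxA.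
by rewrite addrA.
Qed.

Lemma outL x w : SL^T *m (cC *m x + cD *m w) = SL^T *m C *m x +
   SL^T *m D *m (SK *m sol x (SK^T *m w) (SL^T *m w) + SL *m (SL^T *m w)).
Proof.
rewrite mulmxDr !mulmxA /cC /cD !projL /sol.
rewrite !(mulmxDl, mulmxDr, mulmxN, mulNmx, mulmxA) -!addrA.
by congr (_ + (_ + (_ + _))); rewrite addrC.
Qed.

Lemma origK (x : 'cV[R]_p) (v : 'cV[R]_m) : SK^T *m (C *m x + D *m v) =
  SK^T *m C *m x + Dk *m (SK^T *m v) + SK^T *m D *m SL *m (SL^T *m v).
Proof.
by rewrite [in LHS](decomp _ v) hDk !mulmxDr !mulmxA addrA.
Qed.

Lemma blkK i (hi : i \in kappa) (v w : 'cV[R]_m) :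
  blk own i (mergeK own kappa v w) = blk own i v.
Proof.
have d : [disjoint ocomp own i & ~: K].
  rewrite finset.disjoints_subset finset.setCK; apply/fintype.subsetP => j.
  by rewrite !inE => /eqP ->.
rewrite /blk [in LHS](decomp _ (mergeK _ _ _ _)) [in RHS](decomp _ v).
by rewrite mergeK_K mergeK_L !mulmxDr !mulmxA (Sel_disj _ _ d) !mul0mx.
Qed.

Lemma blkL i (hi : i \notin kappa) (v w : 'cV[R]_m) :
  blk own i (mergeK own kappa v w) = blk own i w.
Proof.
have d : [disjoint ocomp own i & K].
  rewrite finset.disjoints_subset; apply/fintype.subsetP => j.
  by rewrite !inE => /eqP ->.
rewrite /blk [in LHS](decomp _ (mergeK _ _ _ _)) [in RHS](decomp _ w).
by rewrite mergeK_K mergeK_L !mulmxDr !mulmxA (Sel_disj _ _ d) !mul0mx.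
Qed.

Local Open Scope classical_set_scope.

Lemma cvg_bsum (V : normedModType R) (I : Type) (r : seq I)
  (g : I -> nat -> V) (l : I -> V) :
  (forall i, g i @ \oo --> l i) ->
  (fun k => \sum_(i <- r) g i k) @ \oo --> \sum_(i <- r) l i.
Proof.
move=> H; elim: r => [|i r IH].
  have -> : (fun k => \sum_(i <- [::]) g i k) = (fun=> 0).
    by apply: boolp.funext => k; rewrite big_nil.
  rewrite big_nil; exact: cvg_cst.
have -> : (fun k => \sum_(j <- i :: r) g j k) =
  (fun k => g i k + \sum_(j <- r) g j k).
  by apply: boolp.funext => k; rewrite big_cons.
rewrite big_cons; exact: cvgD.
Qed.

Lemma mulmx_cvg a b (M : 'M[R]_(a, b)) (v : nat -> 'cV[R]_b) l :
  v @ \oo --> l -> (fun k => M *m v k) @ \oo --> M *m l.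
Proof.
move=> hv.
have E : forall w : 'cV[R]_b, M *m w = \sum_(j < b) (w j 0) *: col j M.
  move=> w; apply/matrixP => i z; rewrite (ord1 z) !mxE summxE.
  by apply: eq_bigr => j _; rewrite !mxE mulrC.
have -> : (fun k => M *m v k) = (fun k => \sum_(j < b) (v k j 0) *: col j M).
  by apply: boolp.funext => k; exact: E.
rewrite E; apply: cvg_bsum => j.
apply: cvgZ; last exact: cvg_cst.
exact: (continuous_cvg _ (@coord_continuous _ _ _ j 0 l) hv).
Qed.

Lemma mergeK_cvg (v w : nat -> 'cV[R]_m) lv lw :
  v @ \oo --> lv -> w @ \oo --> lw ->
  (fun k => mergeK own kappa (v k) (w k)) @ \oo --> mergeK own kappa lv lw.
Proof.
move=> hv hw; rewrite /mergeK; apply: cvgD; apply: mulmx_cvg; exact: mulmx_cvg.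
Qed.

Lemma main_sec (f : forall i : 'I_n, 'cV[R]_#|ocomp own i| -> \bar R)
  (ys us : 'cV[R]_m) (xs : 'cV[R]_p) :
  converges_to own f (finset.set0 : {set 'I_n}) A B C D ys us xs ->
  converges_to own f kappa cA cB cC cD
    (mergeK own kappa us ys) (mergeK own kappa ys us) xs.
Proof.
move=> [[fx fy fo] Hc].
have usE : us = SK *m sol xs (SK^T *m ys) (SL^T *m us) + SL *m (SL^T *m us).
  apply: eq_split; rewrite ?projK ?projL //.
  by apply/solE; rewrite fy origK.
split.
  split.
  - by rewrite stateE mergeK_K mergeK_L -usE.
  - apply: eq_split.
      by rewrite outK !mergeK_K mergeK_L {1}usE projK.
    by rewrite outL !mergeK_L mergeK_K -usE fy mulmxDr !mulmxA.
  - move=> i; have := fo i; rewrite finset.in_set0.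
    case: ifP => hi; first by rewrite !blkK.
    by rewrite !blkL ?hi.
move=> x y' u' Ht.
have Ht0 : trajectory own f finset.set0 A B C D x
   (fun k => mergeK own kappa (u' k) (y' k)) (fun k => mergeK own kappa (y' k) (u' k)).
  move=> k; cbv beta; have [h1 h2 h3] := Ht k.
  have uE : mergeK own kappa (y' k) (u' k) =
      SK *m sol (x k) (SK^T *m u' k) (SL^T *m u' k) + SL *m (SL^T *m u' k).
    apply: eq_split; rewrite ?mergeK_K ?mergeK_L ?projK ?projL //.
    by rewrite h2 outK.
  split.
  - by rewrite h1 stateE -uE.
  - apply: eq_split.
      rewrite mergeK_K origK !mergeK_K mergeK_L h2 outK; exact/solE.
    by rewrite uE mergeK_L h2 outL !mulmxDr !mulmxA.
  - move=> i; rewrite finset.in_set0; have := h3 i.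
    case: ifP => hi; first by rewrite !blkK.
    by rewrite !blkL ?hi.
have [cx cy cu] := Hc _ _ _ Ht0.
have yE : y' = (fun k => mergeK own kappa (mergeK own kappa (y' k) (u' k))
                                       (mergeK own kappa (u' k) (y' k))).
  apply: boolp.funext => k; apply: eq_split; by rewrite ?mergeK_K ?mergeK_L.
have uE : u' = (fun k => mergeK own kappa (mergeK own kappa (u' k) (y' k))
                                       (mergeK own kappa (y' k) (u' k))).
  apply: boolp.funext => k; apply: eq_split; by rewrite ?mergeK_K ?mergeK_L.
split => //.
  by rewrite yE; apply: mergeK_cvg.
by rewrite uE; apply: mergeK_cvg.
Qed.

End Main.

Theorem proposition8p3 (R : realType) (p m n : nat) (own : 'I_m -> 'I_n)
  (f : forall i : 'I_n, 'cV[R]_#|ocomp own i| -> \bar R)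
  (A : 'M[R]_p) (B : 'M[R]_(p, m)) (C : 'M[R]_(m, p)) (D : 'M[R]_m)
  (kappa : {set 'I_n})
  (ys us : 'cV[R]_m) (xs : 'cV[R]_p) :
  Dkappa own kappa D \in unitmx ->
  converges_to own f (finset.set0 : {set 'I_n}) A B C D ys us xs ->
  converges_to own f kappa
    (conjA own kappa A B C D) (conjB own kappa B D)
    (conjC own kappa C D) (conjD own kappa D)
    (mergeK own kappa us ys) (mergeK own kappa ys us) xs.
Proof.
move=> Du Hc.
exact: (@main_sec R p m n own kappa A B C D (Dkappa own kappa D) erefl Du f ys us xs Hc).
Qed.
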